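(* In the NBR+ scheme described in the context, the number of nodes that are retired but not yet reclaimed is bounded (in every execution, including executions in which threads are delayed or crash).
   Context: Setting: an asynchronous shared-memory system with a fixed number $p$ of threads operating on a linked concurrent data structure; each unlinked node is retired by exactly one thread. Each operation reserves at most $k$ nodes, where $k$ is much smaller than the limbo bag threshold. Base mechanism (as in NBR): each thread has a private limbo bag, a thread-local flag restartable, and a row of a shared reservations array; read phases start from an entry point and only read, with restartable set true at their start (after clearing reservations); write phases are entered after reserving all nodes to be accessed there and setting restartable false, and access only reserved nodes; a neutralizing signal makes a thread with restartable true discard its private references and restart from its checkpoint, and is ignored otherwise. NBR+ retire procedure: each thread has a shared counter announceTS and two limbo-bag-size thresholds LoWatermark < HiWatermark $= h$. When retiring a node, if the limbo bag is at the HiWatermark the thread increments its announceTS, signals every other thread, increments its announceTS again, and frees every unreserved node in its limbo bag; otherwise, if the limbo bag is at or above the LoWatermark, on first entry it bookmarks its current last retired node and records all threads' announceTS values, and thereafter if some other thread's announceTS has increased by at least 2 since recording, it frees all unreserved nodes of its limbo bag up to the bookmark. The retired node is then appended to the limbo bag. Signals are assumed to be handled by the recipient before it takes any further step once the sender finishes sending. *)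

(* Defs.v *)
From mathcomp Require Import all_boot.
Set Implicit Arguments. Unset Strict Implicit. Unset Printing Implicit Defensive.

Section NBRplus.
Variable p : nat.
Variable k : nat.     (* max number of reservations per operation *)
Variable lo : nat.
Variable h : nat.

(* Local state of a thread, together with its row of shared variables. *)
Record tstate := TState {
  bag : seq nat;
  resv : seq nat;                             (* row of the reservations array *)
  restartable : bool;
  announceTS : nat;
  lowm : option (nat * ('I_p -> nat));        (* LoWatermark bookmark:
      (number of nodes in the bag when bookmarked, i.e. the bag prefix ending
       at the bookmarked last retired node; recorded announceTS values) *)
  pending : option (nat * seq 'I_p);          (* inside the HiWatermark branch of
      retire(x): node x, threads still to be signalled *)
  neutralized : bool                          (* received a neutralizing signal
      while restartable: must restart from its checkpoint (a new read phase) *)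
}.

Record gstate := GState {
  th : 'I_p -> tstate;
  retired : seq nat;   (* ghost: nodes whose retire has been invoked *)
  freed : seq nat      (* ghost: nodes that have been reclaimed (freed) *)
}.

Definition upd (A : Type) (f : 'I_p -> A) (i : 'I_p) (v : A) : 'I_p -> A :=
  fun j => if j == i then v else f j.

Definition set_bag t b := TState b (resv t) (restartable t) (announceTS t) (lowm t) (pending t) (neutralized t).
Definition set_resv t r := TState (bag t) r (restartable t) (announceTS t) (lowm t) (pending t) (neutralized t).
Definition set_rst t r := TState (bag t) (resv t) r (announceTS t) (lowm t) (pending t) (neutralized t).
Definition set_ats t a := TState (bag t) (resv t) (restartable t) a (lowm t) (pending t) (neutralized t).
Definition set_lowm t l := TState (bag t) (resv t) (restartable t) (announceTS t) l (pending t) (neutralized t).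
Definition set_pending t q := TState (bag t) (resv t) (restartable t) (announceTS t) (lowm t) q (neutralized t).
Definition set_neut t n := TState (bag t) (resv t) (restartable t) (announceTS t) (lowm t) (pending t) n.

Definition reserved (s : gstate) (x : nat) : bool :=
  [exists j : 'I_p, x \in resv (th s j)].

Inductive action :=
  | BeginRead            (* start a read phase (from the entry point / checkpoint):
                            clear own reservations, set restartable true *)
  | Reserve of seq nat
  | EnterWrite
  | Retire of nat        (* invoke retire on an unlinked node *)
  | Continue.            (* next step of an ongoing HiWatermark retire *)

Definition step (s : gstate) (i : 'I_p) (a : action) : option gstate :=
  let t := th s i in
  let put t' := upd (th s) i t' in
  match pending t, a with
  | None, BeginRead =>
      Some (GState (put (set_neut (set_rst (set_resv t [::]) true) false))
                   (retired s) (freed s))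
  | None, Reserve r =>
      if restartable t && ~~ neutralized t && (size r <= k) then
        Some (GState (put (set_resv t r)) (retired s) (freed s))
      else None
  | None, EnterWrite =>
      if restartable t && ~~ neutralized t then
        Some (GState (put (set_rst t false)) (retired s) (freed s))
      else None
  | None, Retire x =>
      if restartable t || (x \in retired s) then None else
      let ret' := x :: retired s in
      if h <= size (bag t) then
        (* HiWatermark: increment announceTS, then signal the others *)
        Some (GState (put (set_pending (set_ats t (announceTS t).+1)
                                       (Some (x, [seq j <- enum 'I_p | j != i]))))
                     ret' (freed s))
      else if lo <= size (bag t) then
        match lowm t with
        | None =>
            (* first entry: bookmark and record all announceTS values *)
            Some (GState (put (set_bag (set_lowm t
                      (Some (size (bag t), fun j => announceTS (th s j))))
                      (rcons (bag t) x))) ret' (freed s))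
        | Some (n, rec) =>
            if [exists j : 'I_p, (j != i) && (rec j + 2 <= announceTS (th s j))] then
              let pre := take n (bag t) in
              let keep := [seq y <- pre | reserved s y] ++ drop n (bag t) in
              Some (GState (put (set_lowm (set_bag t (rcons keep x)) None))
                           ret' ([seq y <- pre | ~~ reserved s y] ++ freed s))
            else
              Some (GState (put (set_bag t (rcons (bag t) x))) ret' (freed s))
        end
      else
        Some (GState (put (set_bag t (rcons (bag t) x))) ret' (freed s))
  | Some (x, j :: rest), Continue =>
      (* send a neutralizing signal to j; handled by j immediately *)
      let tj := th s j in
      let th1 := if restartable tj then upd (th s) j (set_neut tj true) else th s in
      Some (GState (upd th1 i (set_pending (th1 i) (Some (x, rest))))
                   (retired s) (freed s))
  | Some (x, [::]), Continue =>
      let keep := [seq y <- bag t | reserved s y] in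
      Some (GState (put (set_pending (set_lowm (set_bag (set_ats t (announceTS t).+1)
                                                 (rcons keep x)) None) None))
                   (retired s) ([seq y <- bag t | ~~ reserved s y] ++ freed s))
  | _, _ => None
  end.

Definition init_tstate : tstate := TState [::] [::] false 0 None None false.
Definition init_gstate : gstate := GState (fun _ => init_tstate) [::] [::].

(* States reached by some finite execution (arbitrary interleaving; threads
   may be delayed arbitrarily or stop taking steps forever, i.e. crash). *)
Inductive reachable : gstate -> Prop :=
  | reach_init : reachable init_gstate
  | reach_step s i a s' : reachable s -> step s i a = Some s' -> reachable s'.

Definition unreclaimed (s : gstate) : nat :=
  size [seq x <- retired s | x \notin freed s].

End NBRplus.

(* Main.v *)
Require Import Defs.
From mathcomp Require Import all_boot.
Set Implicit Arguments. Unset Strict Implicit. Unset Printing Implicit Defensive.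

Section Proof.
Variables p k lo h : nat.
Hypothesis Hlh : lo < h.

Definition tnodes (t : tstate p) : seq nat :=
  bag t ++ (if pending t is Some (x, _) then [:: x] else [::]).

Definition threadOK (ret : seq nat) (t : tstate p) : Prop :=
  [/\ size (resv t) <= k, uniq (bag t), {subset bag t <= ret},
      (forall x l, pending t = Some (x, l) -> x \notin bag t /\ x \in ret)
    & size (bag t) <= h + p * k].

Definition Inv (s : gstate p) : Prop :=
  [/\ uniq (retired s), (forall j, threadOK (retired s) (th s j)) &
      (forall y, y \in retired s -> y \notin freed s -> exists j, y \in tnodes (th s j))].

Lemma threadOK_mono r r' t : {subset r <= r'} -> threadOK r t -> threadOK r' t.
Proof.
move=> sub [H1 H2 H3 H4 H5]; split=> //.
- by move=> y /H3 /sub.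
- by move=> x l /H4 [? /sub].
Qed.

Lemma size_flatten_map (T : Type) (I : Type) (f : I -> seq T) c (l : seq I) :
  (forall j, size (f j) <= c) -> size (flatten (map f l)) <= size l * c.
Proof.
move=> Hf; elim: l => [|a l IH] //=.
by rewrite size_cat mulSn leq_add.
Qed.

Lemma reserved_filter_size (s : gstate p) (b : seq nat) :
  (forall j, size (resv (th s j)) <= k) -> uniq b ->
  size [seq y <- b | reserved s y] <= p * k.
Proof.
move=> Hr ub.
have := @size_flatten_map _ _ (fun j => resv (th s j)) k (enum 'I_p) Hr.
rewrite size_enum_ord => Hs; apply: leq_trans Hs.
apply: uniq_leq_size; first by rewrite filter_uniq.
move=> y; rewrite mem_filter => /andP [Hy _].
move: Hy; rewrite /reserved => /existsP [j Hj].
apply/flattenP; exists (resv (th s j)) => //.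
by apply/mapP; exists j; rewrite ?mem_enum.
Qed.

Lemma local_ok (s : gstate p) i t' R F :
  Inv s -> uniq (R ++ retired s) -> threadOK (R ++ retired s) t' ->
  {subset R <= tnodes t'} ->
  (forall y, y \in tnodes (th s i) -> y \notin F -> y \in tnodes t') ->
  Inv (GState (upd (th s) i t') (R ++ retired s) (F ++ freed s)).
Proof.
move=> [U T G] UR Tt' sR sT; split=> //=.
- move=> j; rewrite /upd; case: eqP => // _.
  by apply: threadOK_mono (T j) => y; rewrite mem_cat orbC => ->.
- move=> y; rewrite !mem_cat negb_or => /orP [yR|yr] /andP [yF yf].
    by exists i; rewrite /upd eqxx; apply: sR.
  have [j Hj] := G y yr yf; exists j; rewrite /upd; case: eqP => [E|//].
  by subst j; apply: sT.
Qed.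



Lemma rcons_ok (s : gstate p) i (t' : tstate p) y :
  Inv s -> y \notin retired s -> pending (th s i) = None -> pending t' = None ->
  resv t' = resv (th s i) -> bag t' = rcons (bag (th s i)) y ->
  size (bag (th s i)) < h ->
  Inv (GState (upd (th s) i t') (y :: retired s) (freed s)).
Proof.
move=> I yr Hp Hp' Hr Hb Hs; have [U T G] := I; have [T1 T2 T3 T4 T5] := T i.
have ynb : y \notin bag (th s i) by apply/negP => /T3; rewrite (negbTE yr).
apply: (@local_ok s i t' [:: y] [::]) => //=.
- by rewrite yr U.
- split; rewrite ?Hr ?Hb ?Hp' //.
  + by rewrite rcons_uniq ynb T2.
  + by move=> z; rewrite mem_rcons !in_cons => /orP [->|/T3 ->] //; rewrite orbT.
  + by rewrite size_rcons (leq_trans Hs) // leq_addr.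
- by move=> z; rewrite inE => /eqP ->; rewrite /tnodes Hp' Hb cats0 mem_rcons mem_head.
- move=> z; rewrite /tnodes Hp Hp' Hb !cats0 => zb _.
  by rewrite mem_rcons in_cons zb orbT.
Qed.

Lemma neut_inv (s : gstate p) j :
  Inv s -> Inv (GState (if restartable (th s j) then upd (th s) j (set_neut (th s j) true) else th s)
                 (retired s) (freed s)).
Proof.
case: (restartable _) => // -[U T G]; split=> //=.
- by move=> j'; rewrite /upd; case: eqP => _; [exact: (T j)|exact: T].
- move=> y yr yf; have [j' Hj'] := G y yr yf; exists j'.
  by rewrite /upd; case: eqP => [E|] //; subst j'.
Qed.

Lemma step_inv (s s' : gstate p) i a : Inv s -> step k lo h s i a = Some s' -> Inv s'.
Proof.
move=> I; have [U T G] := I; have [T1 T2 T3 T4 T5] := T i.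
have Rk : forall j, size (resv (th s j)) <= k by move=> j; have [] := T j.
rewrite /step /=.
case Hp: (pending (th s i)) => [[x l]|]; case: a => [|r||y|] //; try by case: l Hp.
- case: l Hp => [|j rest] Hp [<-].
  + have [xb xr] := T4 _ _ Hp.
    apply: (@local_ok s i _ [::] _) => //=.
    * split=> //=.
      -- by rewrite rcons_uniq mem_filter negb_and xb orbT filter_uniq.
      -- move=> z; rewrite mem_rcons in_cons mem_filter.
         by case/orP => [/eqP ->|/andP [_ /T3]].
      -- rewrite size_rcons (@leq_trans (p * k).+1) //; first by rewrite ltnS (reserved_filter_size Rk T2).
         by rewrite -add1n leq_add2r; case: (h) Hlh.
    * move=> z; rewrite /tnodes Hp /= cats0 mem_cat mem_filter inE mem_rcons in_cons mem_filter.
      case/orP => [zb|/eqP ->]; last by rewrite eqxx.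
      by rewrite zb andbT negbK => ->; rewrite orbT.
  + have I1 := neut_inv j I.
    set th1 := (if _ then _ else _) in I1 *.
    have Hb : bag (th1 i) = bag (th s i) /\ pending (th1 i) = pending (th s i) /\ resv (th1 i) = resv (th s i).
      by rewrite /th1; case: (restartable _) => //; rewrite /upd; case: eqP => [->|].
    case: Hb => Hb [Hp1 Hr1].
    apply: (@local_ok (GState th1 (retired s) (freed s)) i _ [::] [::] I1) => //=.
    * split=> //=; rewrite ?Hb ?Hr1 //.
      move=> x' l' [<- _]; exact: T4 _ _ Hp.
    * by move=> z; rewrite /tnodes /= Hb Hp1 Hp.
- move=> [<-]; apply: (@local_ok s i _ [::] [::]) => //.
  all: try by split=> //= x l; rewrite Hp.
- case: ifP => [/andP [_ rk]|//]; case=> <-; apply: (@local_ok s i _ [::] [::]) => //.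
  all: try by split=> //= x l; rewrite Hp.
- case: ifP => [_|//]; case=> <-; apply: (@local_ok s i _ [::] [::]) => //.
  all: try by split=> //= x l; rewrite Hp.
- case: ifP => // /norP [_ yr].
  have ynb : y \notin bag (th s i) by apply/negP => /T3; rewrite (negbTE yr).
  case: ifP => hi.
    move=> [<-]; apply: (@local_ok s i _ [:: y] [::]) => //=.
    * by rewrite yr U.
    * split=> //=.
      -- by move=> z /T3 zr; rewrite in_cons zr orbT.
      -- by move=> x l [<- _]; rewrite ynb mem_head.
    * by move=> z; rewrite inE => /eqP ->; rewrite /tnodes /= mem_cat mem_head orbT.
    * by move=> z; rewrite /tnodes Hp /= cats0 mem_cat => ->.
  have hs : size (bag (th s i)) < h by rewrite ltnNge hi.
  case: ifP => lw; last first.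
    by move=> [<-]; apply: rcons_ok.
  case: (lowm (th s i)) => [[n rc]|]; last by move=> [<-]; apply: rcons_ok.
  case: ifP => _; last by move=> [<-]; apply: rcons_ok.
  move=> [<-].
  set b := bag (th s i).
  set keep := [seq y0 <- take n b | reserved s y0] ++ drop n b.
  have sk : subseq keep b.
    by have := cat_subseq (filter_subseq (reserved s) (take n b)) (subseq_refl (drop n b)); rewrite cat_take_drop.
  have kb : {subset keep <= b} by apply: mem_subseq.
  apply: (@local_ok s i _ [:: y] _) => //=.
  * by rewrite yr U.
  * split=> //=.
    -- by rewrite rcons_uniq (contra (@kb y)) // (subseq_uniq sk).
    -- move=> z; rewrite mem_rcons !in_cons.
       by case/orP => [->//|/kb /T3 ->]; rewrite orbT.
    -- by move=> x l; rewrite Hp.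
    -- rewrite size_rcons (leq_trans _ (leq_addr _ _)) // (leq_ltn_trans _ hs) //.
       exact: size_subseq.
  * by move=> z; rewrite inE => /eqP ->; rewrite /tnodes /= ?cats0 mem_cat mem_rcons mem_head.
  * move=> z; rewrite /tnodes /= Hp !cats0 mem_rcons in_cons => zb zF.
    apply/orP; right; rewrite mem_cat.
    move: zb; rewrite -/b -{1}(cat_take_drop n b) mem_cat => /orP [zt|->]; last by rewrite orbT.
    by rewrite mem_filter zt andbT; move: zF; rewrite mem_filter zt andbT negbK => ->.
Qed.

Lemma reach_inv (s : gstate p) : reachable k lo h s -> Inv s.
Proof.
elim=> [|s0 i a s1 _ IH Hs]; last exact: step_inv IH Hs.
split=> //= j; split=> //= x l; discriminate.
Qed.

End Proof.

Theorem lemma10 (p k lo h : nat) (Hlh : lo < h) (Hk : k < h) :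
  exists B : nat, forall s : gstate p,
    reachable k lo h s -> unreclaimed s <= B.
Proof.
exists (p * (h + p * k).+1) => s /(reach_inv Hlh) [U T G].
have := @size_flatten_map _ _ (fun j => tnodes (th s j)) (h + p * k).+1 (enum 'I_p).
rewrite size_enum_ord => Hs.
apply: leq_trans (Hs _); last first.
  move=> j; have [_ _ _ T4 T5] := T j; rewrite /tnodes size_cat.
  by case: (pending _) => [[x l]|] /=; rewrite ?addn1 ?addn0 ?ltnS // ltnW.
apply: uniq_leq_size; first by rewrite filter_uniq.
move=> y; rewrite mem_filter => /andP [yf yr].
have [j Hj] := G y yr yf.
by apply/flattenP; exists (tnodes (th s j)) => //; apply/mapP; exists j; rewrite ?mem_enum.
Qed.
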